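(* Let $A$ be an infinite set of positive integers with $1\in A$. Then $\mathrm{Single}(n,A)$ and $\mathrm{Total}(n,A)$ are finite for all $n\ge1$ (and hence, for every $n$, every play of $\mathrm{AGG}(n,A)$ ends after finitely many steps) if and only if the differences between consecutive elements of $A$ (listed in increasing order) are unbounded.
   Context: For an integer $n\ge 0$ and a set $A$ of positive integers with $1\in A$, the abstract generalized 2048 game $\mathrm{AGG}(n,A)$ is played on $n$ indistinguishable cells. A position assigns to each cell either nothing (the cell is empty) or a tile carrying a value in $A$. The initial position has all cells empty. A step, which can be performed from any position having at least one empty cell, consists of: (i) placing a new tile of value $1$ into a chosen empty cell; then (ii) optionally choosing any collection of pairwise disjoint sets of nonempty cells such that the sum of the tile values in each chosen set belongs to $A$, and merging each chosen set into a single tile, whose value is that sum, placed in one cell of the set, the other cells of the set becoming empty. The game ends when, after a step, all cells are nonempty (no further step is then possible). A position is reachable if it can be obtained from the initial position by a finite sequence of steps; its total value is the sum of its tile values. For $n\ge1$, $\mathrm{Single}(n,A)$ is the supremum (possibly $\infty$) of the values $x\in A$ such that the position of $\mathrm{AGG}(n,A)$ with one tile of value $x$ and $n-1$ empty cells is reachable, and $\mathrm{Total}(n,A)$ is the supremum (possibly $\infty$) of the total values of reachable positions of $\mathrm{AGG}(n,A)$. *)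

(* Defs.v *)
From mathcomp Require Import all_boot.
Set Implicit Arguments. Unset Strict Implicit. Unset Printing Implicit Defensive.

Definition position (n : nat) := 'I_n -> option nat.

Definition tval (o : option nat) : nat := if o is Some v then v else 0.

Definition set_sum n (p : position n) (S : {set 'I_n}) : nat :=
  \sum_(i in S) tval (p i).

Definition total_value n (p : position n) : nat := \sum_(i < n) tval (p i).

Definition empty_position n : position n := fun _ => None.

Definition place n (p : position n) (c : 'I_n) : position n :=
  fun i => if i == c then Some 1 else p i.

(* (ii) optional merging: Ss is a collection of (set of cells, chosen target cell);
   the sets consist of nonempty cells, are pairwise disjoint, have sum in A;
   each set is merged into its chosen cell, the other cells of the set become empty;
   cells not in any chosen set are unchanged.  Ss = [::] means no merge. *)
Definition merge_step (A : nat -> Prop) n (p q : position n) : Prop :=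
  exists Ss : seq ({set 'I_n} * 'I_n),
    (forall Sr, Sr \in Ss ->
       [/\ Sr.2 \in Sr.1, (forall i, i \in Sr.1 -> p i <> None) & A (set_sum p Sr.1)]) /\
    (forall Sr Tr, Sr \in Ss -> Tr \in Ss -> Sr != Tr -> [disjoint Sr.1 & Tr.1]) /\
    (forall i : 'I_n,
       ((forall Sr, Sr \in Ss -> i \notin Sr.1) -> q i = p i) /\
       (forall Sr, Sr \in Ss -> i \in Sr.1 ->
          q i = if i == Sr.2 then Some (set_sum p Sr.1) else None)).

Definition agg_step (A : nat -> Prop) n (p q : position n) : Prop :=
  exists c : 'I_n, p c = None /\ merge_step A (place p c) q.

Inductive reachable (A : nat -> Prop) (n : nat) : position n -> Prop :=
  | reach_init : reachable A (@empty_position n)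
  | reach_step (p q : position n) : reachable A p -> agg_step A p q -> reachable A q.

Definition single_finite (A : nat -> Prop) n : Prop :=
  exists B : nat, forall (x : nat) (p : position n),
    A x -> reachable A p ->
    (exists i : 'I_n, p i = Some x /\ forall j, j != i -> p j = None) ->
    x <= B.

Definition total_finite (A : nat -> Prop) n : Prop :=
  exists B : nat, forall p : position n, reachable A p -> total_value p <= B.

Definition gaps_unbounded (A : nat -> Prop) : Prop :=
  forall M : nat, exists a b : nat,
    [/\ A a, A b, a < b, (forall c, a < c < b -> ~ A c) & M <= b - a].

(* Main.v *)
Require Import Defs.
From mathcomp Require Import all_boot.
From mathcomp Require Import zify.
From Stdlib Require Import Classical FunctionalExtensionality.
Set Implicit Arguments. Unset Strict Implicit. Unset Printing Implicit Defensive.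

Lemma pS (T : eqType) (s t : seq T) : perm_eq s t -> perm_eq t s.
Proof. by rewrite perm_sym. Qed.

Definition merge1 (A : nat -> Prop) (s t : seq nat) : Prop :=
  exists g rest, [/\ perm_eq s (g ++ rest), 0 < size g, A (sumn g)
                   & perm_eq t (sumn g :: rest)].

Inductive clos (A : nat -> Prop) : seq nat -> seq nat -> Prop :=
| cl_refl s t : perm_eq s t -> clos A s t
| cl_step s u t : merge1 A s u -> clos A u t -> clos A s t.

Inductive RR (A : nat -> Prop) (k : nat) : seq nat -> Prop :=
| RR_nil : RR A k [::]
| RR_step s t : RR A k s -> size s < k -> clos A (1 :: s) t -> RR A k t.

Lemma clos_permL A s s' t : perm_eq s s' -> clos A s t -> clos A s' t.
Proof.
move=> P H; destruct H as [s0 t0 H|s0 u t0 [g [rest [H1 H2 H3 H4]]] H].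
  by apply: cl_refl; exact: perm_trans (pS P) H.
apply: cl_step H; exists g, rest; split=> //.
exact: perm_trans (pS P) H1.
Qed.

Lemma clos_permR A s t t' : clos A s t -> perm_eq t t' -> clos A s t'.
Proof.
elim=> [s0 t0 H|s0 u t0 M _ IH] P; first by apply: cl_refl; apply: perm_trans H P.
exact: cl_step M (IH P).
Qed.

Lemma clos_trans A s u t : clos A s u -> clos A u t -> clos A s t.
Proof.
elim=> [s0 t0 H|s0 u0 t0 M _ IH] Ht; first exact: clos_permL (pS H) Ht.
exact: cl_step M (IH Ht).
Qed.

Lemma merge_clos A s t : merge1 A s t -> clos A s t.
Proof. by move=> M; apply: cl_step M (cl_refl _ (perm_refl _)). Qed.

Lemma clos_sumn A s t : clos A s t -> sumn s = sumn t.
Proof.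
elim=> [s0 t0 H|s0 u t0 [g [rest [H1 H2 H3 H4]]] _ IH]; first exact: perm_sumn.
by rewrite -IH (perm_sumn H1) (perm_sumn H4) sumn_cat.
Qed.

Lemma clos_size A s t : clos A s t -> size t <= size s.
Proof.
elim=> [s0 t0 H|s0 u t0 [g [rest [H1 H2 H3 H4]]] _ IH]; first by rewrite (perm_size H).
apply: (leq_trans IH). rewrite (perm_size H1) (perm_size H4) size_cat /=. by case: (size g) H2 => // k _; rewrite addSn ltnS leq_addl.
Qed.

Lemma clos_nil A t : clos A [::] t -> t = [::].
Proof.
move=> H; have := clos_size H; by case: t {H}.
Qed.

Lemma clos_A A s t : (forall x, x \in s -> A x) -> clos A s t -> forall x, x \in t -> A x.
Proof.
move=> HA H; elim: H HA => [s0 t0 H|s0 u t0 [g [rest [H1 H2 H3 H4]]] _ IH] HA.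
  by move=> x; rewrite -(perm_mem H); apply: HA.
apply: IH => x; rewrite (perm_mem H4) inE => /orP[/eqP->//|xr].
by apply: HA; rewrite (perm_mem H1) mem_cat xr orbT.
Qed.

Lemma unmerge A x s : clos A x s -> forall u v, perm_eq s (u ++ v) ->
  exists x1 x2, [/\ perm_eq x (x1 ++ x2), clos A x1 u & clos A x2 v].
Proof.
elim=> [s0 t0 H|s0 y t0 [g [rest [H1 H2 H3 H4]]] _ IH] u v P.
  exists u, v; split; [exact: perm_trans H P|exact: cl_refl|exact: cl_refl].
have [y1 [y2 [Py C1 C2]]] := IH _ _ P.
have : sumn g \in y1 ++ y2 by rewrite -(perm_mem Py) (perm_mem H4) mem_head.
rewrite mem_cat => /orP[] Hin.
- have Q := perm_to_rem Hin.
  have Hr : perm_eq rest (rem (sumn g) y1 ++ y2).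
    have := perm_trans (pS H4) Py.
    move=> X; rewrite -(perm_cons (sumn g)); apply: perm_trans X _.
    by rewrite -cat_cons perm_cat2r.
  exists (g ++ rem (sumn g) y1), y2; split=> //.
  + by rewrite -catA (perm_trans H1) // perm_cat2l.
  + apply: cl_step C1; exists g, (rem (sumn g) y1); split=> //.
- have Q := perm_to_rem Hin.
  have Hr : perm_eq rest (y1 ++ rem (sumn g) y2).
    have := perm_trans (pS H4) Py.
    move=> X; rewrite -(perm_cons (sumn g)); apply: perm_trans X _.
    by rewrite (perm_catl y1 Q) -cat1s perm_catCA.
  exists y1, (g ++ rem (sumn g) y2); split=> //.
  + apply: perm_trans H1 _; by rewrite perm_sym perm_catCA perm_cat2l perm_sym.
  + apply: cl_step C2; exists g, (rem (sumn g) y2); split=> //.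
Qed.

Lemma swap12 (T : eqType) (a b : T) s : perm_eq (a :: b :: s) (b :: a :: s).
Proof. by rewrite -(cat1s a) -(cat1s b) -[b :: _]cat1s perm_catCA. Qed.

Lemma lineage A x q : clos A x q -> forall m w, perm_eq x (m :: w) ->
  exists m' z u w2, [/\ perm_eq q (m' :: z), perm_eq w (u ++ w2), clos A w2 z
                       & m' = m + sumn u].
Proof.
elim=> [s0 t0 H|s0 y t0 [g [rest [H1 H2 H3 H4]]] _ IH] m w P.
  exists m, w, [::], w; split=> //; last by rewrite addn0.
  - exact: perm_trans (pS H) P.
  - exact: cl_refl.
have : m \in g ++ rest by rewrite -(perm_mem H1) (perm_mem P) mem_head.
rewrite mem_cat => /orP[] Hin.
- have Q := perm_to_rem Hin.
  have Hw : perm_eq w (rem m g ++ rest).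
    have X := perm_trans (pS P) H1.
    rewrite -(perm_cons m); apply: perm_trans X _.
    by rewrite -cat_cons perm_cat2r.
  have [m' [z [u [w2 [Pq Pr Cz Em]]]]] := IH _ _ H4.
  exists m', z, (rem m g ++ u), w2; split=> //.
  + apply: perm_trans Hw _; by rewrite -catA perm_cat2l.
  + by rewrite Em sumn_cat addnA (perm_sumn Q).
- have Q := perm_to_rem Hin.
  have Hw : perm_eq w (g ++ rem m rest).
    have X := perm_trans (pS P) H1.
    rewrite -(perm_cons m); apply: perm_trans X _.
    by rewrite (perm_catl g Q) -cat1s perm_catCA.
  have Py : perm_eq y (m :: (sumn g :: rem m rest)).
    apply: perm_trans H4 _.
    apply: (@perm_trans _ (sumn g :: m :: rem m rest)); first by rewrite perm_cons.
    exact: swap12.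
  have [m' [z [u [w2 [Pq Pr Cz Em]]]]] := IH _ _ Py.
  have Cg : clos A (g ++ rem m rest) (sumn g :: rem m rest).
    apply: merge_clos; exists g, (rem m rest); split=> //.
  have [x1 [x2 [Px C1 C2]]] := unmerge Cg Pr.
  exists m', z, x1, x2; split=> //.
  + exact: perm_trans Hw Px.
  + exact: clos_trans C2 Cz.
  + by rewrite Em (clos_sumn C1).
Qed.

Lemma RR_perm A k s s' : RR A k s -> perm_eq s s' -> RR A k s'.
Proof.
move=> H P; destruct H as [|s0 t H1 H2 H3].
  by move: P; rewrite perm_sym => /perm_nilP ->; constructor.
by apply: RR_step H1 H2 _; apply: clos_permR H3 P.
Qed.

Lemma RR_clos A k s t : RR A k s -> clos A s t -> RR A k t.
Proof.
move=> H C; destruct H as [|s0 t0 H1 H2 H3].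
  by rewrite (clos_nil C); constructor.
by apply: RR_step H1 H2 _; apply: clos_trans H3 C.
Qed.

Lemma RR_remove A k s : RR A k s -> forall u v, perm_eq s (u ++ v) -> RR A k v.
Proof.
elim=> [|p t Hp IH Hs C] u v P.
  by move: P; rewrite perm_sym => /perm_nilP; case: u => //; case: v => // _; constructor.
have [x1 [x2 [Px C1 C2]]] := unmerge C P.
have : 1 \in x1 ++ x2 by rewrite -(perm_mem Px) mem_head.
rewrite mem_cat => /orP[] Hin.
- have Q := perm_to_rem Hin.
  have Hp' : perm_eq p (rem 1 x1 ++ x2).
    rewrite -(perm_cons 1); apply: perm_trans Px _.
    by rewrite -cat_cons perm_cat2r.
  exact: RR_clos (IH _ _ Hp') C2.
- have Q := perm_to_rem Hin.
  have Hp' : perm_eq p (x1 ++ rem 1 x2).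
    rewrite -(perm_cons 1); apply: perm_trans Px _.
    by rewrite (perm_catl x1 Q) -cat1s perm_catCA.
  apply: RR_step (IH _ _ Hp') _ _.
  + by apply: leq_ltn_trans _ Hs; rewrite (perm_size Hp') size_cat leq_addl.
  + exact: clos_permL Q C2.
Qed.

Lemma RR_size A k s : RR A k s -> size s <= k.
Proof. by elim=> // p t _ _ Hs C; apply: leq_trans (clos_size C) _. Qed.

Lemma RR_A A k s : A 1 -> RR A k s -> forall x, x \in s -> A x.
Proof.
move=> A1; elim=> // p t _ IH _ C; apply: clos_A C => x; rewrite inE => /orP[/eqP->//|].
exact: IH.
Qed.

Lemma RR_lineage A k q : RR A k.+1 q -> q <> [::] ->
  exists m rest, perm_eq q (m :: rest) /\ RR A k rest.
Proof.
elim=> // p t Hp IH Hs C _.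
case: p Hp IH Hs C => [|x p'] Hp IH Hs C.
  have [m' [z [u [w2 [Pq Pr Cz Em]]]]] := lineage C (perm_refl _).
  move: Pr; rewrite perm_sym => /perm_nilP; case: u Em => // _; case: w2 Cz => // Cz _.
  by exists m', z; split=> //; rewrite (clos_nil Cz); constructor.
have [m [rest [Pp Rr]]] := IH (fun H => ltac:(discriminate H)).
have P1 : perm_eq (1 :: x :: p') (m :: (1 :: rest)).
  by apply: perm_trans (swap12 _ _ _); rewrite !perm_cons.
have [m' [z [u [w2 [Pq Pr Cz Em]]]]] := lineage C P1.
exists m', z; split=> //.
have R1 : RR A k (1 :: rest).
  apply: RR_step Rr _ (cl_refl _ (perm_refl _)).
  by move: Hs; rewrite (perm_size Pp) /=.
exact: RR_clos (RR_remove R1 Pr) Cz.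
Qed.

Lemma mem_le_sumn (s : seq nat) x : x \in s -> x <= sumn s.
Proof.
elim: s => //= y s IH; rewrite inE => /orP[/eqP->|/IH]; first exact: leq_addr.
by move=> H; apply: leq_trans H (leq_addl _ _).
Qed.

Lemma sumn_le (s : seq nat) a : (forall x, x \in s -> x <= a) -> sumn s <= size s * a.
Proof.
elim: s => //= y s IH H; rewrite mulSn leq_add ?H ?mem_head // IH // => x xs.
by apply: H; rewrite inE xs orbT.
Qed.

Lemma RR_bound A (Apos : forall a, A a -> 0 < a) (A1 : A 1) :
  gaps_unbounded A -> forall n, exists C, forall q, RR A n q -> sumn q <= C.
Proof.
move=> G; elim=> [|n [C HC]].
  exists 0 => q /RR_size; by case: q.
have [a [b [Aa Ab ab gap Mb]]] := G C.+1.
have small : forall y, A y -> y <= a + C -> y <= a.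
  move=> y Ay Hy; rewrite leqNgt; apply/negP => ay.
  apply: (gap y) => //; rewrite ay /=; lia.
have a1 : 1 <= a by apply: Apos.
have inv : forall q, RR A n.+1 q -> forall x, x \in q -> x <= a.
  move=> q Rq; elim: Rq (Rq) => [|p t Hp IH Hs Cl] Rt //.
  case: p Hp IH Hs Cl => [|x0 p'] Hp IH Hs Cl.
    have [m' [z [u [w2 [Pq Pr Cz Em]]]]] := lineage Cl (perm_refl _).
    move: Pr; rewrite perm_sym => /perm_nilP; case: u Em => // Em; case: w2 Cz => // Cz _.
    move=> x; rewrite (perm_mem Pq) (clos_nil Cz) Em !inE orbF => /eqP->; exact: a1.
  have [m [rest [Pp Rr]]] := RR_lineage Hp (fun H => ltac:(discriminate H)).
  have P1 : perm_eq (1 :: x0 :: p') (m :: (1 :: rest)).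
    by apply: perm_trans (swap12 _ _ _); rewrite !perm_cons.
  have [m' [z [u [w2 [Pq Pr Cz Em]]]]] := lineage Cl P1.
  have R1 : RR A n (1 :: rest).
    apply: RR_step Rr _ (cl_refl _ (perm_refl _)).
    by move: Hs; rewrite (perm_size Pp) /=.
  have Rz : RR A n z := RR_clos (RR_remove R1 Pr) Cz.
  have S1 := HC _ R1.
  have Su : sumn u <= C.
    apply: leq_trans S1; rewrite (perm_sumn Pr) sumn_cat; exact: leq_addr.
  have ma : m <= a by apply: (IH Hp); rewrite (perm_mem Pp) mem_head.
  have At := RR_A A1 Rt.
  move=> y; rewrite (perm_mem Pq) inE => /orP[/eqP->|yz].
    apply: small; first by apply: At; rewrite (perm_mem Pq) mem_head.
    rewrite Em; exact: leq_add.
  apply: small; first by apply: At; rewrite (perm_mem Pq) inE yz orbT.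
  apply: leq_trans (leq_addl _ _); apply: leq_trans (HC _ Rz); exact: mem_le_sumn.
exists (n.+1 * a) => q Rq; apply: leq_trans (sumn_le (inv _ Rq)) _.
by rewrite leq_mul2r (RR_size Rq) orbT.
Qed.

Definition tiles n (p : position n) : seq nat := pmap p (index_enum 'I_n).

Lemma size_index_ord n : size (index_enum 'I_n) = n.
Proof. by rewrite /index_enum unlock -enumT -cardT card_ord. Qed.

Lemma sum_pmap n (p : position n) s : \sum_(i <- s) Defs.tval (p i) = sumn (pmap p s).
Proof.
elim: s => [|x s IH]; first by rewrite big_nil.
by rewrite big_cons IH /=; case: (p x).
Qed.

Lemma total_tiles n (p : position n) : total_value p = sumn (tiles p).
Proof. by rewrite /total_value sum_pmap. Qed.

Lemma pmap_split (T : eqType) (f : T -> option nat) (a : pred T) s :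
  perm_eq (pmap f s) (pmap f (filter a s) ++ pmap f (filter (predC a) s)).
Proof.
elim: s => //= x s IH; case: (a x) => /=; case: (f x) => [v|] //=.
- by rewrite perm_cons.
- rewrite perm_sym -[v :: pmap f [seq x <- s | ~~ a x]]cat1s perm_catCA /= perm_cons.
  by rewrite perm_sym.
Qed.

Lemma size_tiles n (p : position n) : size (tiles p) <= n.
Proof. rewrite /tiles size_pmap; apply: leq_trans (count_size _ _) _; by rewrite size_index_ord. Qed.

Lemma place_tiles n (p : position n) c : p c = None ->
  perm_eq (tiles (place p c)) (1 :: tiles p).
Proof.
move=> pc; rewrite /tiles.
have F := filter_pred1_uniq (index_enum_uniq 'I_n) (mem_index_enum c).
have E : pmap (place p c) [seq x <- index_enum 'I_n | predC (pred1 c) x] =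
         pmap p [seq x <- index_enum 'I_n | predC (pred1 c) x].
  apply: eq_in_pmap => i; rewrite mem_filter /= /place => /andP[/negbTE-> _] //.
apply: perm_trans (pmap_split _ (pred1 c) _) _.
rewrite F E /= /place eqxx perm_cons perm_sym.
apply: perm_trans (pmap_split _ (pred1 c) _) _.
by rewrite F /= pc.
Qed.

Lemma pmap_single (T : eqType) (f : T -> option nat) s r v :
  uniq s -> r \in s -> (forall i, i \in s -> f i = if i == r then Some v else None) ->
  pmap f s = [:: v].
Proof.
elim: s => //= x s IH /andP[xs us]; rewrite inE => rin Hf.
have Hf' : forall i, i \in s -> f i = if i == r then Some v else None.
  by move=> i ins; apply: Hf; rewrite inE ins orbT.
rewrite Hf ?mem_head //; case: eqP => [xr|xr] /=.
  rewrite -xr in Hf'; congr (_ :: _).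
  have -> : pmap f s = pmap (fun _ => None) s.
    apply: eq_in_pmap => i ins; rewrite Hf' //; case: eqP => // ix.
    by rewrite -ix ins in xs.
  by elim: (s).
apply: IH => //; move: rin => /orP[/eqP rx|//]; by rewrite rx in xr.
Qed.

Lemma set_sum_pmap n (p : position n) (S : {set 'I_n}) :
  set_sum p S = sumn (pmap p [seq i <- index_enum 'I_n | i \in S]).
Proof. by rewrite /set_sum -sum_pmap big_filter. Qed.

Lemma one_group A n (p0 p1 : position n) (S : {set 'I_n}) r :
  r \in S -> (forall i, i \in S -> p0 i <> None) -> A (set_sum p0 S) ->
  (forall i, p1 i = if i \in S then (if i == r then Some (set_sum p0 S) else None) else p0 i) ->
  merge1 A (tiles p0) (tiles p1).
Proof.
move=> rS nn As H1.
set g := pmap p0 [seq i <- index_enum 'I_n | i \in S].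
set rest := pmap p0 [seq i <- index_enum 'I_n | predC (mem S) i].
have sg : sumn g = set_sum p0 S by rewrite set_sum_pmap.
exists g, rest; split.
- exact: pmap_split.
- have := nn r rS; case E: (p0 r) => [v|//] _.
  have : v \in g by rewrite /g mem_pmap -E map_f // mem_filter rS mem_index_enum.
  by case: (g).
- by rewrite sg.
- apply: perm_trans (pmap_split _ (mem S) _) _.
  have -> : pmap p1 [seq i <- index_enum 'I_n | i \in S] = [:: sumn g].
    apply: (@pmap_single _ _ _ r).
    + exact: filter_uniq (index_enum_uniq _).
    + by rewrite mem_filter rS mem_index_enum.
    + by move=> i; rewrite mem_filter => /andP[iS _]; rewrite H1 iS sg.
  have -> : pmap p1 [seq i <- index_enum 'I_n | predC (mem S) i] = rest.
    apply: eq_in_pmap => i; rewrite mem_filter /= => /andP[iS _].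
    by rewrite H1 (negbTE iS).
  by [].
Qed.

Definition appl n (p : position n) (Ts : seq ({set 'I_n} * 'I_n)) : position n :=
  foldr (fun (Sr : {set 'I_n} * 'I_n) (acc : position n) (i : 'I_n) => if i \in Sr.1 then (if i == Sr.2 then Some (set_sum p Sr.1) else None)
                         else acc i) p Ts.

Lemma appl_out n (p : position n) (Ts : seq ({set 'I_n} * 'I_n)) i :
  (forall Sr, Sr \in Ts -> i \notin Sr.1) -> appl p Ts i = p i.
Proof.
elim: Ts => //= Sr Ts IH H; rewrite (negbTE (H _ (mem_head _ _))) IH // => Tr T.
by apply: H; rewrite inE T orbT.
Qed.

Lemma appl_in n (p : position n) (Ts : seq ({set 'I_n} * 'I_n)) i Sr :
  (forall Sr Tr, Sr \in Ts -> Tr \in Ts -> Sr != Tr -> [disjoint Sr.1 & Tr.1]) ->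
  Sr \in Ts -> i \in Sr.1 ->
  appl p Ts i = if i == Sr.2 then Some (set_sum p Sr.1) else None.
Proof.
elim: Ts => //= Tr Ts IH D; rewrite inE => /orP[/eqP->|ST] iS.
  by rewrite iS.
case: ifP => iT.
  case: (eqVneq Sr Tr) => [->//|nST].
  have := D Sr Tr; rewrite mem_head inE ST orbT => /(_ isT isT nST).
  by rewrite disjoint_sym => /disjointFr/(_ iT); rewrite iS.
apply: IH => // S1 T1 h1 h2; apply: D; by rewrite inE ?h1 ?h2 orbT.
Qed.

Lemma appl_clos A n (p : position n) (Ts : seq ({set 'I_n} * 'I_n)) :
  uniq Ts ->
  (forall Sr, Sr \in Ts ->
     [/\ Sr.2 \in Sr.1, (forall i, i \in Sr.1 -> p i <> None) & A (set_sum p Sr.1)]) ->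
  (forall Sr Tr, Sr \in Ts -> Tr \in Ts -> Sr != Tr -> [disjoint Sr.1 & Tr.1]) ->
  clos A (tiles p) (tiles (appl p Ts)).
Proof.
elim: Ts => [|Sr Ts IH] /=; first by move=> *; apply: cl_refl.
move=> /andP[nS uT] H1 D.
have H1' : forall Sr, Sr \in Ts ->
     [/\ Sr.2 \in Sr.1, (forall i, i \in Sr.1 -> p i <> None) & A (set_sum p Sr.1)].
  by move=> T T'; apply: H1; rewrite inE T' orbT.
have D' : forall S T, S \in Ts -> T \in Ts -> S != T -> [disjoint S.1 & T.1].
  by move=> S T h1 h2; apply: D; rewrite inE ?h1 ?h2 orbT.
apply: clos_trans (IH uT H1' D') _.
have eqS : forall i, i \in Sr.1 -> appl p Ts i = p i.
  move=> i iS; apply: appl_out => T TT; apply/negP => iT.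
  have nST : Sr != T by apply/eqP => E; rewrite E TT in nS.
  have := D Sr T (mem_head _ _); rewrite inE TT orbT => /(_ isT nST).
  by move/disjointFr/(_ iS); rewrite iT.
have ss : set_sum (appl p Ts) Sr.1 = set_sum p Sr.1.
  by rewrite /set_sum; apply: eq_bigr => i iS; rewrite eqS.
have [h1 h2 h3] := H1 _ (mem_head _ _).
apply: merge_clos; apply: (@one_group A n _ _ Sr.1 Sr.2) => //.
- by move=> i iS; rewrite eqS //; apply: h2.
- by rewrite ss.
- by move=> i; rewrite ss.
Qed.

Lemma merge_step_clos A n (p q : position n) :
  merge_step A p q -> clos A (tiles p) (tiles q).
Proof.
move=> [Ss [H1 [H2 H3]]].
set Ts := undup Ss.
have H1' : forall Sr, Sr \in Ts ->
     [/\ Sr.2 \in Sr.1, (forall i, i \in Sr.1 -> p i <> None) & A (set_sum p Sr.1)].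
  by move=> Sr; rewrite mem_undup; apply: H1.
have H2' : forall Sr Tr, Sr \in Ts -> Tr \in Ts -> Sr != Tr -> [disjoint Sr.1 & Tr.1].
  by move=> Sr Tr; rewrite !mem_undup; apply: H2.
have -> : tiles q = tiles (appl p Ts).
  rewrite /tiles; apply: eq_pmap => i.
  have [h3 h4] := H3 i.
  case: (boolP (has (fun Sr : {set 'I_n} * 'I_n => i \in Sr.1) Ss)) => [/hasP[Sr SrS iS]|/hasPn hn].
    by rewrite (h4 _ SrS iS) (@appl_in _ p Ts i Sr H2') // mem_undup.
  by rewrite h3 // appl_out // => Sr; rewrite mem_undup; apply: hn.
exact: appl_clos (undup_uniq _) H1' H2'.
Qed.

Lemma reach_RR A n (p : position n) : reachable A p -> RR A n (tiles p).
Proof.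
elim=> [|p0 q _ IH [c [pc M]]].
  have -> : tiles (@empty_position n) = [::] by rewrite /tiles; elim: (index_enum _).
  constructor.
have P := place_tiles pc.
apply: RR_step IH _ _.
  by have := size_tiles (place p0 c); rewrite (perm_size P).
exact: clos_permL P (merge_step_clos M).
Qed.

Lemma merge_nil A n (p : position n) : merge_step A p p.
Proof.
exists [::]; split; first by move=> Sr; rewrite in_nil.
split; first by move=> Sr; rewrite in_nil.
by move=> i; split=> // Sr; rewrite in_nil.
Qed.

Lemma total_place n (p : position n) c : p c = None ->
  total_value (place p c) = (total_value p).+1.
Proof.
move=> pc; rewrite /total_value (bigD1 c) // [in RHS](bigD1 c) //= /place eqxx pc /=.
rewrite add0n add1n; congr (_.+1); apply: eq_bigr => i /negbTE -> //.
Qed.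

Definition sing M x : position M.+1 := fun i => if val i == 0 then Some x else None.
Arguments sing : clear implicits.

Lemma total_single n (p : position n) i x :
  p i = Some x -> (forall j, j != i -> p j = None) -> total_value p = x.
Proof.
move=> pi Hj; rewrite /total_value (bigD1 i) //= pi big1 ?addn0 // => j /Hj -> //.
Qed.

Lemma total_sing M x : total_value (sing M x) = x.
Proof.
apply: (@total_single _ _ ord0) => // j jn; rewrite /sing ifF //.
by apply: contraNF jn => /eqP h; apply/eqP; exact: val_inj.
Qed.

Definition pos M a k : position M.+1 :=
  fun i => if val i == 0 then Some a else if val i <= k then Some 1 else None.
Arguments pos : clear implicits.

Lemma pos_place M a k (k1 : k.+1 < M.+1) :
  pos M a k.+1 = place (pos M a k) (Ordinal k1) /\ pos M a k (Ordinal k1) = None.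
Proof.
split; last by rewrite /pos /= ltnn.
apply: functional_extensionality => i; rewrite /pos /place.
have -> : (i == Ordinal k1) = (val i == k.+1) by [].
case: (val i) => [|j] //=; rewrite eqSS.
case: (ltngtP j k) => h.
- by rewrite ltnW // ltnW.
- by rewrite ltnS leqNgt h.
- by rewrite ?h ltnS leqnn.
Qed.

Lemma total_pos M a k : k < M.+1 -> total_value (pos M a k) = a + k.
Proof.
elim: k => [|k IH] h.
  rewrite addn0; apply: (@total_single _ _ ord0) => // j jn.
  have jz : (val j == 0) = false.
    by apply: contraNF jn => /eqP h0; apply/eqP; exact: val_inj.
  by rewrite /pos jz; case: (val j) jz.
have k1 : k.+1 < M.+1 by [].
have [E N] := pos_place a k1.
by rewrite E total_place // IH ?addnS // ltnW.
Qed.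

Lemma gap_exists A (A1 : A 1) x : 1 < x ->
  exists a, [/\ A a, a < x & forall c, a < c < x -> ~ A c].
Proof.
elim: x => // x IH hx.
have [h|h] : 1 < x \/ x = 1 by lia.
- have [a [Aa ax H]] := IH h.
  case: (classic (A x)) => Ax.
    exists x; split=> // c /andP[h1 h2]; lia.
  exists a; split=> //; first lia.
  move=> c /andP[h1 h2]; have [cx|->//] : c < x \/ c = x by lia.
  by apply: H; rewrite h1.
- exists 1; split=> //.
  move=> c /andP[h1 h2]; lia.
Qed.

Lemma build A M (Apos : forall a, A a -> 0 < a) (A1 : A 1)
  (Hgap : forall a b, A a -> A b -> a < b -> (forall c, a < c < b -> ~ A c) -> b - a < M) :
  forall x, A x -> reachable A (sing M x).
Proof.
elim/ltn_ind => x IH Ax.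
have [x1|x1] : x = 1 \/ 1 < x by have := Apos _ Ax; lia.
  subst x; apply: reach_step (reach_init A (M.+1)) _.
  exists ord0; split=> //.
  have -> : sing M 1 = place (@empty_position M.+1) ord0.
    by apply: functional_extensionality => i; rewrite /sing /place.
  exact: merge_nil.
have [a [Aa ax H]] := gap_exists A1 x1.
have dM := Hgap _ _ Aa Ax ax H.
have Ra := IH _ ax Aa.
have Hk : forall k, k < M -> reachable A (pos M a k).
  elim=> [|k IHk] kM.
    have -> : pos M a 0 = sing M a.
      apply: functional_extensionality => i; rewrite /pos /sing.
      by case: (val i).
    exact: Ra.
  have k1 : k.+1 < M.+1 by rewrite ltnS ltnW.
  have [E N] := pos_place a k1.
  apply: reach_step (IHk (ltnW kM)) _; exists (Ordinal k1); split=> //.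
  rewrite -E; exact: merge_nil.
set d := (x - a).-1.
have dx : a + d.+1 = x by rewrite /d; lia.
have k1 : d.+1 < M.+1 by rewrite /d; lia.
have [E N] := pos_place a k1.
apply: reach_step (Hk d _) _; first by rewrite /d; lia.
exists (Ordinal k1); split=> //; rewrite -E.
set S := [set i : 'I_M.+1 | val i <= d.+1].
have sS : set_sum (pos M a d.+1) S = x.
  rewrite -dx -(total_pos a k1) /set_sum /total_value big_mkcond.
  apply: eq_bigr => i _; rewrite inE; case: ifP => // h.
  by rewrite /pos h; case: (val i) h.
exists [:: (S, ord0)]; split.
  move=> Sr; rewrite inE => /eqP-> /=; split.
  - by rewrite inE.
  - by move=> i; rewrite inE /pos => ->; case: ifP.
  - by rewrite sS.
split.
  by move=> Sr Tr; rewrite !inE => /eqP-> /eqP->; rewrite eqxx.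
move=> i; split.
  move=> /(_ _ (mem_head _ _)) /=; rewrite inE -ltnNge => h.
  by rewrite /sing /pos leqNgt h; case: (val i) h.
move=> Sr; rewrite inE => /eqP-> /= _.
by rewrite sS /sing.
Qed.

Theorem mainTheorem8 (A : nat -> Prop)
  (Apos : forall a, A a -> 0 < a) (A1 : A 1)
  (Ainf : forall m, exists a, A a /\ m < a) :
  (forall n, 1 <= n -> single_finite A n /\ total_finite A n) <-> gaps_unbounded A.
Proof.
split; last first.
  move=> G n _; have [C HC] := RR_bound Apos A1 G n.
  have T : total_finite A n.
    by exists C => p Rp; rewrite total_tiles; apply: HC; apply: reach_RR.
  split=> //; have [B HB] := T; exists B => x p Ax Rp [i [pi Hj]].
  by rewrite -(total_single pi Hj); apply: HB.
move=> H; apply: NNPP => NG.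
have [M HM] : exists M, ~ exists a b,
    [/\ A a, A b, a < b, (forall c, a < c < b -> ~ A c) & M <= b - a].
  by apply: not_all_ex_not => HH; apply: NG.
have Hgap : forall a b, A a -> A b -> a < b -> (forall c, a < c < b -> ~ A c) -> b - a < M.
  move=> a b Aa Ab ab gap; rewrite ltnNge; apply/negP => Mb.
  by apply: HM; exists a, b.
have [_ [B HB]] := H M.+1 isT.
have [x [Ax Bx]] := Ainf B.
have := HB _ (build Apos A1 Hgap Ax); rewrite total_sing; lia.
Qed.
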